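(* Let $R$ be a commutative Artinian ring, $M$ a non-zero $R$-module, $N$ and $L$ incomparable PS-hollow submodules of $M$, and $H\subseteq Ass^h(M)$. Then $N+L$ is $H$-PS-hollow if and only if $N$ and $L$ are both $H$-PS-hollow.
   Context: An $R$-submodule $N\leq M$ is PS-hollow iff for every ideal $I\leq R$ and every submodule $L\leq M$: $N\subseteq IM+L$ implies $N\subseteq IM$ or $N\subseteq L$. For a PS-hollow $N\leq M$ put $A_N=\{I\leq R: N\subseteq IM\}$ and let $H_N$ be the set of minimal elements of $A_N$ w.r.t. inclusion. For a set $H$ of ideals, $N$ is $H$-PS-hollow iff $N$ is PS-hollow and $H_N=H$. $Ass^h(M)$ (the associated hollow ideals of $M$) is the set of ideals $I$ with $I\in H_N$ for some PS-hollow submodule $N\leq M$. *)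

(* Defs.v *)
From HB Require Import structures.
From mathcomp Require Import all_boot all_order all_algebra.
From mathcomp Require Import boolp classical_sets.
Set Implicit Arguments. Unset Strict Implicit. Unset Printing Implicit Defensive.
Import GRing.Theory.
Local Open Scope classical_set_scope.
Local Open Scope ring_scope.

Definition is_ideal (R : comPzRingType) (I : set R) : Prop :=
  I 0 /\ (forall a b, I a -> I b -> I (a + b)) /\ (forall r a, I a -> I (r * a)).

Definition is_submodule (R : comPzRingType) (M : lmodType R) (N : set M) : Prop :=
  N 0 /\ (forall x y, N x -> N y -> N (x + y)) /\ (forall (r : R) x, N x -> N (r *: x)).

(* I M : the set of finite sums  sum_k i_k m_k  with i_k in I. *)
Definition idealmod (R : comPzRingType) (M : lmodType R) (I : set R) : set M :=
  [set x | exists s : seq (R * M),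
      (forall p, p \in s -> I p.1) /\ x = \sum_(p <- s) p.1 *: p.2].
Arguments idealmod {R} M I.

Definition sumset (R : comPzRingType) (M : lmodType R) (N L : set M) : set M :=
  [set x | exists n l, N n /\ L l /\ x = n + l].

Definition PS_hollow (R : comPzRingType) (M : lmodType R) (N : set M) : Prop :=
  is_submodule N /\
  forall (I : set R) (L : set M), is_ideal I -> is_submodule L ->
    N `<=` sumset (idealmod M I) L -> N `<=` idealmod M I \/ N `<=` L.

Definition A_set (R : comPzRingType) (M : lmodType R) (N : set M) : set (set R) :=
  [set I | is_ideal I /\ N `<=` idealmod M I].
Arguments A_set {R} M N.

Definition H_set (R : comPzRingType) (M : lmodType R) (N : set M) : set (set R) :=
  [set I | A_set M N I /\ forall J, A_set M N J -> J `<=` I -> J = I].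
Arguments H_set {R} M N.

Definition H_PS_hollow (R : comPzRingType) (M : lmodType R) (H : set (set R))
    (N : set M) : Prop :=
  PS_hollow N /\ H_set M N = H.

Definition Ass_h (R : comPzRingType) (M : lmodType R) : set (set R) :=
  [set I | exists N : set M, PS_hollow N /\ H_set M N I].
Arguments Ass_h {R} M.

Definition artinian_ring (R : comPzRingType) : Prop :=
  forall I : nat -> set R, (forall n, is_ideal (I n)) ->
    (forall n, I n.+1 `<=` I n) ->
    exists n0, forall n, (n0 <= n)%N -> I n = I n0.

(* Main.v *)
Require Import Defs.
From HB Require Import structures.
From mathcomp Require Import all_boot all_order all_algebra.
From mathcomp Require Import boolp classical_sets.
Local Open Scope classical_set_scope.
Local Open Scope ring_scope.
Import GRing.Theory.

Section Aux.
Variables (R : comPzRingType) (M : lmodType R).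

Lemma idealmod0 (I : set R) : idealmod M I 0.
Proof. by exists [::]; split=> //; rewrite big_nil. Qed.

Lemma idealmodD (I : set R) x y :
  idealmod M I x -> idealmod M I y -> idealmod M I (x + y).
Proof.
move=> [s [Hs ->]] [t [Ht ->]]; exists (s ++ t); split; last by rewrite big_cat.
by move=> p; rewrite mem_cat => /orP [/Hs|/Ht].
Qed.

Lemma idealmod_mono (I J : set R) : J `<=` I -> idealmod M J `<=` idealmod M I.
Proof. by move=> JI x [s [Hs ->]]; exists s; split => // p /Hs /JI. Qed.

Lemma sumset_sub (N L K : set M) : is_submodule K -> N `<=` K -> L `<=` K ->
  sumset N L `<=` K.
Proof. by move=> [_ [KD _]] NK LK x [n [l [Nn [Ll ->]]]]; apply: KD; auto. Qed.

Lemma sumsetC (N L : set M) : sumset N L = sumset L N.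
Proof.
by apply/seteqP; split=> x [n [l [Nn [Ll ->]]]]; exists l, n; rewrite addrC.
Qed.

Lemma sumset_submod (N L : set M) : is_submodule N -> is_submodule L ->
  is_submodule (sumset N L).
Proof.
move=> [N0 [ND NZ]] [L0 [LD LZ]]; split; first by exists 0, 0; rewrite addr0.
split.
  move=> x y [n [l [Nn [Ll ->]]]] [n' [l' [Nn' [Ll' ->]]]].
  exists (n + n'), (l + l'); do 2 (split; first by auto).
  by rewrite addrACA.
move=> r x [n [l [Nn [Ll ->]]]]; exists (r *: n), (r *: l).
by do 2 (split; first by auto); rewrite scalerDr.
Qed.

Lemma A_sum (N L : set M) : is_submodule N -> is_submodule L ->
  PS_hollow (sumset N L) -> ~ (N `<=` L) -> A_set M N = A_set M (sumset N L).
Proof.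
move=> [N0 _] [L0 LS] [_ hS] nNL; apply/seteqP; split=> I [II HI]; split=> //.
  have: sumset N L `<=` sumset (idealmod M I) L.
    by move=> x [n [l [Nn [Ll ->]]]]; exists n, l; auto.
  case/(hS I L II (conj L0 LS)) => // SL.
  exfalso; apply: nNL => n Nn; apply: SL; exists n, 0; split => //.
  by rewrite addr0.
by move=> n Nn; apply: HI; exists n, 0; do 2 (split; first by [|exact: sL.1]); rewrite addr0.
Qed.

Lemma min_below (art : artinian_ring R) (S : set M) I :
  A_set M S I -> exists J, H_set M S J /\ J `<=` I.
Proof.
move=> AI; have [//|nex] := pselect (exists J, H_set M S J /\ J `<=` I).
pose P J J' := A_set M S J' /\ J' `<=` J /\ J' <> J.
have step : forall J, A_set M S J -> J `<=` I -> exists J', P J J'.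
  move=> J AJ JI; apply: contrapT => nst; apply: nex; exists J; split => //.
  split => // J' AJ' J'J; apply: contrapT => ne; apply: nst; exists J'.
  by split.
pose f J := if pselect (exists J', P J J') is left e then projT1 (cid e) else J.
pose ch n := iter n f I.
have fP : forall J, A_set M S J -> J `<=` I -> P J (f J).
  move=> J AJ JI; rewrite /f; case: pselect => [e|ne].
    exact: (projT2 (cid e)).
  by exfalso; apply: ne; apply: step.
have inv : forall n, A_set M S (ch n) /\ ch n `<=` I.
  elim => [|n [An nI]]; first by split.
  have [A' [sub _]] := fP _ An nI.
  by split => //; apply: (subset_trans sub nI).
have dec : forall n, ch n.+1 `<=` ch n /\ ch n.+1 <> ch n.
  by move=> n; have [An nI] := inv n; have [_ [sub neq]] := fP _ An nI.
have [n0 Hn0] := art ch (fun n => (inv n).1.1) (fun n => (dec n).1).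
by exfalso; apply: (dec n0).2; exact: Hn0.
Qed.

End Aux.

Theorem proposition5p5 (R : comPzRingType) (M : lmodType R)
    (N L : set M) (H : set (set R)) :
  artinian_ring R ->
  (exists m : M, m != 0) ->
  PS_hollow N -> PS_hollow L ->
  ~ (N `<=` L) -> ~ (L `<=` N) ->
  H `<=` Ass_h M ->
  (H_PS_hollow H (sumset N L) <-> (H_PS_hollow H N /\ H_PS_hollow H L)).
Proof.
move=> art _ PN PL nNL nLN _.
have sN := PN.1; have sL := PL.1.
split.
  move=> [PS HS]; split; split => //; rewrite -HS /H_set.
    by rewrite (@A_sum _ _ _ _ sN sL PS nNL).
  by rewrite sumsetC in PS *; rewrite (@A_sum _ _ _ _ sL sN PS nLN).
move=> [[_ HN] [_ HL]].
have sub1 : forall (X Y : set M), H_set M X = H -> H_set M Y = H ->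
    A_set M X `<=` A_set M Y.
  move=> X Y HX HY I AI; have [J [HJ JI]] := @min_below _ _ art _ _ AI.
  have : H_set M Y J by rewrite HY -HX.
  move=> [[_ YJ] _]; split; first exact: AI.1.
  by apply: subset_trans YJ _; apply: idealmod_mono.
have eNL : A_set M N = A_set M L by apply/seteqP; split; apply: sub1.
have PS : PS_hollow (sumset N L).
  split; first exact: sumset_submod.
  move=> I K II sK hyp.
  have NS : N `<=` sumset N L by move=> n Nn; exists n, 0; do 2 (split; first by [|exact: sL.1]); rewrite addr0.
  have LS : L `<=` sumset N L by move=> l Ll; exists 0, l; do 2 (split; first by [exact: sN.1|]); rewrite add0r.
  have IS : is_submodule (idealmod M I).
    split; first exact: idealmod0.
    split; first by move=> x y; apply: idealmodD.
    move=> r x [s [Hs ->]]; exists [seq (r * p.1, p.2) | p <- s]; split.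
      by move=> p /mapP [q /Hs Iq ->]; apply: II.2.2.
    by rewrite big_map scaler_sumr; apply: eq_bigr => p _; rewrite scalerA.
  have [NI|NK] := PN.2 I K II sK (subset_trans NS hyp);
  have [LI|LK] := PL.2 I K II sK (subset_trans LS hyp).
  - by left; apply: sumset_sub.
  - left; apply: sumset_sub => //.
    by have [] : A_set M L I by rewrite -eNL.
  - left; apply: sumset_sub => //.
    by have [] : A_set M N I by rewrite eNL.
  - by right; apply: sumset_sub.
split => //; rewrite /H_set -(@A_sum _ _ _ _ sN sL PS nNL).
exact: HN.
Qed.
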